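(* Let $I:[0,1]^2\to[0,1]$ be a fuzzy implication function, let $U_1,U_2$ be disjunctive uninorms with neutral elements $e_1,e_2\in\,]0,1[$ respectively, and let $N_1,N_2$ be fuzzy negations such that $$I(x,y)=U_1(N_1(x),y)=U_2(N_2(x),y)\quad\text{for all }x,y\in[0,1].$$ Then: (i) if $U_1=U_2$, then $N_1=N_2$; (ii) if $N_1,N_2$ are continuous and $N_1=N_2$, then $U_1=U_2$; (iii) if $e_1=e_2$ and $N_1,N_2$ are continuous, then $U_1=U_2$ and $N_1=N_2$.
   Context: A fuzzy negation is a non-increasing map $N:[0,1]\to[0,1]$ with $N(0)=1$, $N(1)=0$. A uninorm is a map $U:[0,1]^2\to[0,1]$ that is commutative, associative, non-decreasing in each variable, and has a neutral element $e\in[0,1]$ ($U(x,e)=x$ for all $x$). A uninorm is disjunctive if $U(1,0)=1$. A fuzzy implication function is a map $I:[0,1]^2\to[0,1]$ that is non-increasing in the first variable, non-decreasing in the second, and satisfies $I(0,0)=I(1,1)=1$, $I(1,0)=0$. *)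

(* Defs.v *)
(* concrete reals R. Functions on [0,1] are modelled as
   R -> R (resp. R -> R -> R) whose values outside [0,1] are irrelevant:
   all axioms and all conclusions are quantified over [0,1] only. *)
From Stdlib Require Import Reals.
Open Scope R_scope.

Definition in01 (x : R) : Prop := 0 <= x <= 1.

Definition fuzzy_negation (N : R -> R) : Prop :=
  (forall x, in01 x -> in01 (N x)) /\
  (forall x y, in01 x -> in01 y -> x <= y -> N y <= N x) /\
  N 0 = 1 /\ N 1 = 0.

Definition uninorm (U : R -> R -> R) (e : R) : Prop :=
  in01 e /\
  (forall x y, in01 x -> in01 y -> in01 (U x y)) /\
  (forall x y, in01 x -> in01 y -> U x y = U y x) /\
  (forall x y z, in01 x -> in01 y -> in01 z -> U x (U y z) = U (U x y) z) /\
  (forall x1 x2 y, in01 x1 -> in01 x2 -> in01 y -> x1 <= x2 -> U x1 y <= U x2 y) /\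
  (forall x y1 y2, in01 x -> in01 y1 -> in01 y2 -> y1 <= y2 -> U x y1 <= U x y2) /\
  (forall x, in01 x -> U x e = x).

Definition disjunctive (U : R -> R -> R) : Prop := U 1 0 = 1.

Definition fuzzy_implication (I : R -> R -> R) : Prop :=
  (forall x y, in01 x -> in01 y -> in01 (I x y)) /\
  (forall x1 x2 y, in01 x1 -> in01 x2 -> in01 y -> x1 <= x2 -> I x2 y <= I x1 y) /\
  (forall x y1 y2, in01 x -> in01 y1 -> in01 y2 -> y1 <= y2 -> I x y1 <= I x y2) /\
  I 0 0 = 1 /\ I 1 1 = 1 /\ I 1 0 = 0.

Definition continuous01 (N : R -> R) : Prop :=
  forall x, in01 x -> forall eps, eps > 0 -> exists delta, delta > 0 /\
    forall y, in01 y -> Rabs (y - x) < delta -> Rabs (N y - N x) < eps.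

Definition eq01 (f g : R -> R) : Prop := forall x, in01 x -> f x = g x.
Definition eq01_2 (f g : R -> R -> R) : Prop :=
  forall x y, in01 x -> in01 y -> f x y = g x y.

(* Main.v *)
Require Import Defs.
From Stdlib Require Import Reals Lra.
Open Scope R_scope.

Definition clamp (x : R) : R := Rmax 0 (Rmin 1 x).

Lemma clamp_in01 x : in01 (clamp x).
Proof. unfold clamp, in01, Rmax, Rmin; repeat destruct Rle_dec; lra. Qed.

Lemma clamp_id x : in01 x -> clamp x = x.
Proof. unfold clamp, in01, Rmax, Rmin; intros; repeat destruct Rle_dec; lra. Qed.

Lemma clamp_lip x y : Rabs (clamp y - clamp x) <= Rabs (y - x).
Proof. unfold clamp, Rmax, Rmin; repeat destruct Rle_dec; unfold Rabs;
  repeat destruct Rcase_abs; lra. Qed.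

Lemma surj (N : R -> R) : continuous01 N -> N 0 = 1 -> N 1 = 0 ->
  forall a, in01 a -> exists x, in01 x /\ N x = a.
Proof.
  intros HC H0 H1 a Ha.
  set (f := fun x => N (clamp x) - a).
  assert (Hf : continuity f).
  { intros x. unfold continuity_pt, continue_in, limit1_in, limit_in. simpl.
    intros eps Heps. destruct (HC (clamp x) (clamp_in01 x) eps Heps) as [d [Hd Hd']].
    exists d. split; [exact Hd|]. intros y [_ Hy]. unfold R_dist in *. unfold f.
    replace (N (clamp y) - a - (N (clamp x) - a)) with (N (clamp y) - N (clamp x)) by ring.
    apply Hd'. apply clamp_in01. eapply Rle_lt_trans. apply clamp_lip. exact Hy. }
  assert (Hp : f 0 * f 1 <= 0).
  { unfold f. rewrite !clamp_id by (unfold in01; lra). rewrite H0, H1.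
    unfold in01 in Ha. nra. }
  destruct (IVT_cor f 0 1 Hf ltac:(lra) Hp) as [z [Hz Hz']].
  exists z. split; [exact Hz|]. unfold f in Hz'. rewrite clamp_id in Hz' by exact Hz. lra.
Qed.

Theorem proposition1 (I U1 U2 : R -> R -> R) (N1 N2 : R -> R) (e1 e2 : R) :
  fuzzy_implication I ->
  uninorm U1 e1 -> 0 < e1 < 1 -> disjunctive U1 ->
  uninorm U2 e2 -> 0 < e2 < 1 -> disjunctive U2 ->
  fuzzy_negation N1 -> fuzzy_negation N2 ->
  (forall x y, in01 x -> in01 y -> I x y = U1 (N1 x) y /\ I x y = U2 (N2 x) y) ->
  (eq01_2 U1 U2 -> eq01 N1 N2) /\
  (continuous01 N1 -> continuous01 N2 -> eq01 N1 N2 -> eq01_2 U1 U2) /\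
  (e1 = e2 -> continuous01 N1 -> continuous01 N2 -> eq01_2 U1 U2 /\ eq01 N1 N2).
Proof.
  intros HI HU1 He1 HD1 HU2 He2 HD2 HN1 HN2 HE.
  destruct HU1 as [Ie1 [_ [_ [_ [_ [_ Neu1]]]]]].
  destruct HU2 as [Ie2 [_ [_ [_ [_ [_ Neu2]]]]]].
  destruct HN1 as [R1 [_ [N10 N11]]].
  destruct HN2 as [R2 [_ [N20 N21]]].
  assert (PartII : continuous01 N1 -> eq01 N1 N2 -> eq01_2 U1 U2).
  { intros C1 E x y Hx Hy.
    destruct (surj N1 C1 N10 N11 x Hx) as [z [Hz Hzx]].
    destruct (HE z y Hz Hy) as [A B]. rewrite <- Hzx. rewrite (E z Hz) at 2.
    congruence. }
  split; [|split].
  - intros E x Hx. destruct (HE x e1 Hx Ie1) as [A B].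
    rewrite Neu1 in A by auto. rewrite <- E in B by auto. rewrite Neu1 in B by auto.
    congruence.
  - intros C1 _ E. exact (PartII C1 E).
  - intros Ee C1 _.
    assert (E : eq01 N1 N2).
    { intros x Hx. destruct (HE x e1 Hx Ie1) as [A B].
      rewrite Neu1 in A by auto. rewrite Ee in B. rewrite Neu2 in B by auto. congruence. }
    split; [exact (PartII C1 E) | exact E].
Qed.
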